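(* Let $m$ be a non-negative integer, let $A$ be a $k$-tuple of elements of $\mathbb{Z}/m\mathbb{Z}$ and let $\lambda,p$ be positive integers with $k\mid p$. Then the orbit of $S=\mathrm{IAP}(A,AX_k)$ is $(p,\lambda p)$-periodic if and only if $\pi_{m/\gcd(p/k,m)}(AX_k)=0$ and $A\in\mathrm{Lker}_m M_k^{(\lambda p)}$, where $M_k^{(\lambda p)}=W_k^{(\lambda p)}+X_kT_k^{(\lambda p)}$ and $W_k^{(\lambda p)}=C_k^{(\lambda p)}+(-1)^{\lambda p+1}I_k$.
   Context: $\mathbb{Z}/0\mathbb{Z}=\mathbb{Z}$. For $d\mid m$, $\pi_d$ is reduction from $\mathbb{Z}/m\mathbb{Z}$ to $\mathbb{Z}/d\mathbb{Z}$, entrywise. Tuples are row vectors and integer matrices act after reduction mod $m$. $X_k=(\delta_{r,s}+\delta_{r,k-s+1})_{1\le r,s\le k}$. For $k$-tuples $A=(a_0,\dots,a_{k-1})$, $D=(d_0,\dots,d_{k-1})$, $\mathrm{IAP}(A,D)=(u_j)_{j\in\mathbb{Z}}$ with $u_{qk+r}=a_r+qd_r$. The orbit of $(u_j)_{j\in\mathbb{Z}}$ is $(a_{i,j})_{(i,j)\in\mathbb{N}\times\mathbb{Z}}$ with $a_{0,j}=u_j$, $a_{i,j}=-a_{i-1,j}-a_{i-1,j+1}$; it is $(p,q)$-periodic if $a_{i+q,j}=a_{i,j+p}=a_{i,j}$ for all $(i,j)$. $C_k^{(i)}=\big(\sum_{\alpha\in\mathbb{Z}}\binom{i}{\alpha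 k+r-s}\big)_{1\le r,s\le k}$, $T_k^{(i)}=\big(\sum_{\alpha\in\mathbb{Z}}\alpha\binom{i}{\alpha k+r-s}\big)_{1\le r,s\le k}$ with $\binom{a}{b}=0$ if $b<0$ or $b>a$. $\mathrm{Lker}_m M=\{X\in(\mathbb{Z}/m\mathbb{Z})^{n}: X\pi_m(M)=0\}$. *)

(* Defs.v *)
(* Elements of Z/mZ (m >= 0, Z/0Z = Z) are represented by
   integer representatives; equality in Z/mZ is congruence modulo m
   (intdiv's (_ = _ %[mod m])%Z, which for m = 0 is equality in Z). *)
From mathcomp Require Import all_boot all_order all_algebra.
Set Implicit Arguments. Unset Strict Implicit. Unset Printing Implicit Defensive.
Import Order.TTheory GRing.Theory Num.Theory.
Local Open Scope ring_scope.

Definition rv_at (k : nat) (A : 'rV[int]_k) (r : nat) : int :=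
  match insub r with Some i => A 0 i | None => 0 end.

Definition IAP (k : nat) (A D : 'rV[int]_k) (j : int) : int :=
  rv_at A `|(j %% k)%Z|%N + (j %/ k)%Z * rv_at D `|(j %% k)%Z|%N.

Fixpoint orbitA (u : int -> int) (i : nat) (j : int) : int :=
  match i with
  | 0%N => u j
  | i'.+1 => - orbitA u i' j - orbitA u i' (j + 1)
  end.

Definition periodic (m : nat) (a : nat -> int -> int) (p q : nat) : Prop :=
  forall (i : nat) (j : int),
    (a (i + q)%N j = a i j %[mod (m : int)])%Z /\
    (a i (j + (p : int)) = a i j %[mod (m : int)])%Z.

(* X_k = (delta_{r,s} + delta_{r,k-s+1}), 1-indexed; here 0-indexed. *)
Definition Xk (k : nat) : 'M[int]_k :=
  \matrix_(r < k, s < k) (((r == s :> nat) : int) + ((r == (k.-1 - s)%N :> nat) : int)).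

Definition binz (a : nat) (b : int) : int :=
  if b < 0 then 0 else ('C(a, `|b|%N) : int).

(* The sums over alpha in Z are finite; for k >= 1 every alpha with
   0 <= alpha k + r - s <= i lies in [-(i+1), i+1], so we sum over that range. *)
Definition Ck (k i : nat) : 'M[int]_k :=
  \matrix_(r < k, s < k)
    \sum_(t < (2 * i + 3)%N)
      let alpha : int := (t : int) - (i.+1 : int) in
      binz i (alpha * (k : int) + (r : int) - (s : int)).

Definition Tk (k i : nat) : 'M[int]_k :=
  \matrix_(r < k, s < k)
    \sum_(t < (2 * i + 3)%N)
      let alpha : int := (t : int) - (i.+1 : int) in
      alpha * binz i (alpha * (k : int) + (r : int) - (s : int)).

Definition Wk (k i : nat) : 'M[int]_k := Ck k i + ((-1) ^+ i.+1)%:M.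

Definition Mk (k i : nat) : 'M[int]_k := Wk k i + Xk k *m Tk k i.

Definition Lker (m n : nat) (M : 'M[int]_n) (X : 'rV[int]_n) : Prop :=
  forall s : 'I_n, ((X *m M) ord0 s = 0 %[mod (m : int)])%Z.

Definition pi_zero (d n : nat) (X : 'rV[int]_n) : Prop :=
  forall s : 'I_n, (X ord0 s = 0 %[mod (d : int)])%Z.

(* Main.v *)
Require Import Defs.
From mathcomp Require Import all_boot all_order all_algebra.
From mathcomp Require Import zify ring.
Import Order.TTheory GRing.Theory Num.Theory.
Local Open Scope ring_scope.



Lemma orbit_shift (u : int -> int) (c : int) i j :
  orbitA (fun x => u (x + c)) i j = orbitA u i (j + c).
Proof.
elim: i j => [|i IH] j //=.
by rewrite !IH (addrAC j 1 c).
Qed.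

Lemma orbit_comp (u : int -> int) n i j :
  orbitA u (i + n)%N j = orbitA (orbitA u n) i j.
Proof. by elim: i j => [|i IH] j //=; rewrite !IH. Qed.

Lemma orbit_sub (u v : int -> int) i j :
  orbitA (fun x => u x - v x) i j = orbitA u i j - orbitA v i j.
Proof. elim: i j => [|i IH] j //=; rewrite !IH; ring. Qed.

Lemma orbit_dvd (m : int) (w : int -> int) i j :
  (forall x, (m %| w x)%Z) -> (m %| orbitA w i j)%Z.
Proof.
move=> H; elim: i j => [|i IH] j //=.
by rewrite rpredB ?rpredN.
Qed.

Lemma orbit_anti (u : int -> int) i j :
  (forall x, u (-1 - x) = - u x) ->
  orbitA u i (-1 - (i : int) - j) = - orbitA u i j.
Proof.
move=> H; elim: i j => [|i IH] j /=; first by rewrite subr0 H.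
have E1 : -1 - (i.+1 : int) - j = -1 - (i : int) - (j + 1) by lia.
have E2 : -1 - (i.+1 : int) - j + 1 = -1 - (i : int) - j by lia.
rewrite E2 E1 !IH; ring.
Qed.

Lemma orbit_sd (u : int -> int) (c : int) i :
  (forall x, u (x + c + c) - u (x + c) = u (x + c) - u x) ->
  forall j, orbitA u i (j + c + c) - orbitA u i (j + c) =
            orbitA u i (j + c) - orbitA u i j.
Proof.
move=> H; elim: i => [|i IH] j //=.
have E1 : j + c + c + 1 = (j + 1) + c + c by ring.
have E2 : j + c + 1 = (j + 1) + c by ring.
rewrite E1 E2.
have := IH j; have := IH (j + 1). lia.
Qed.

Lemma pascal_sum (x : nat -> int) i :
  \sum_(l < i.+2) ('C(i.+1, l) : int) * x l =
  \sum_(l < i.+1) ('C(i, l) : int) * x l +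
  \sum_(l < i.+1) ('C(i, l) : int) * x l.+1.
Proof.
rewrite big_ord_recl /= bin0.
under eq_bigr => l _ do rewrite /bump /= add1n binS PoszD mulrDl.
rewrite big_split /= addrA; congr (_ + _).
rewrite [X in _ = X]big_ord_recl /= bin0.
rewrite [X in _ + X = _]big_ord_recr /= bin_small // mul0r addr0.
by rewrite addrC.
Qed.

Lemma orbit_formula (u : int -> int) i j :
  orbitA u i j = (-1) ^+ i * \sum_(l < i.+1) ('C(i, l) : int) * u (j + (l : int)).
Proof.
elim: i j => [|i IH] j /=.
  by rewrite big_ord1 expr0 mul1r bin0 mul1r addr0.
rewrite !IH exprS (pascal_sum (fun l : nat => u (j + (l : int)))) /=.
have -> : \sum_(l < i.+1) ('C(i, l) : int) * u (j + 1 + (l : int)) =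
          \sum_(l < i.+1) ('C(i, l) : int) * u (j + (l.+1 : int)).
  by apply: eq_bigr => l _; rewrite -addrA (addrC 1) -PoszD addn1.
ring.
Qed.


Lemma rv_atE k (A : 'rV[int]_k) r (h : (r < k)%N) : rv_at A r = A 0 (Ordinal h).
Proof. by rewrite /rv_at insubT. Qed.

Lemma rv_at_ord k (A : 'rV[int]_k) (i : 'I_k) : rv_at A i = A 0 i.
Proof. rewrite (@rv_atE _ A _ (ltn_ord i)); congr (A 0 _); exact: val_inj. Qed.

Lemma IAP_eq k (A D : 'rV[int]_k) (q : int) (s : nat) : (s < k)%N ->
  IAP A D (q * (k : int) + (s : int)) = rv_at A s + q * rv_at D s.
Proof.
move=> hs; rewrite /IAP.
have k0 : (k : int) != 0 by rewrite eqz_nat; case: k hs {A D}.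
have hs' : 0 <= (s : int) < `|(k : int)|%N by apply/andP; split; [exact: le0z_nat | rewrite /= ltz_nat].
rewrite divzMDl // divz_small // addr0.
have -> : ((q * k + s) %% k)%Z = s.
  by rewrite modzMDl modz_small.
by [].
Qed.

Lemma decomp k (j : int) : (0 < k)%N ->
  exists q : int, exists s : nat, (s < k)%N /\ j = q * (k : int) + (s : int).
Proof.
move=> k0.
have hk : (0 < (k : int)) by rewrite ltz_nat.
have hk' : (k : int) != 0 by rewrite gt_eqF.
have h1 := ltz_pmod j hk.
have h2 := modz_ge0 j hk'.
have E := divz_eq j k.
move: h1 h2 E; case: (j %% k)%Z => // n h1 _ E.
by exists (j %/ k)%Z, n; split.
Qed.

Lemma XkE k (A : 'rV[int]_k) (s : nat) : (s < k)%N ->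
  rv_at (A *m Xk k) s = rv_at A s + rv_at A (k.-1 - s).
Proof.
move=> hs.
have hs2 : (k.-1 - s < k)%N by lia.
rewrite (@rv_atE _ _ _ hs) (@rv_atE _ A _ hs) (@rv_atE _ A _ hs2) !mxE.
under eq_bigr => r _ do rewrite mxE mulrDr.
rewrite big_split /=; congr (_ + _).
  rewrite (bigD1 (Ordinal hs)) //= eqxx mulr1 big1 ?addr0 // => r hr.
  case: eqP => [h|]; last by rewrite mulr0.
  by case/eqP: hr; apply: val_inj.
rewrite (bigD1 (Ordinal hs2)) //= eqxx mulr1 big1 ?addr0 // => r hr.
case: eqP => [h|]; last by rewrite mulr0.
by case/eqP: hr; apply: val_inj.
Qed.

Lemma u_anti (k : nat) (A : 'rV[int]_k) (k0 : (0 < k)%N) (x : int) : IAP A (A *m Xk k) (-1 - x) = - IAP A (A *m Xk k) x.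
Proof.
have [q [s [hs ->]]] := decomp k x k0.
have hs2 : (k.-1 - s < k)%N by lia.
have E : -1 - (q * k + s) = (- q - 1) * (k : int) + ((k.-1 - s)%N : int).
  have -> : ((k.-1 - s)%N : int) = (k : int) - 1 - (s : int) by lia.
  ring.
rewrite E !IAP_eq // !XkE //.
have -> : (k.-1 - (k.-1 - s))%N = s by lia.
ring.
Qed.

Lemma u_sd (k : nat) (A : 'rV[int]_k) (k0 : (0 < k)%N) (x : int) : IAP A (A *m Xk k) (x + k + k) - IAP A (A *m Xk k) (x + k) = IAP A (A *m Xk k) (x + k) - IAP A (A *m Xk k) x.
Proof.
have [q [s [hs ->]]] := decomp k x k0.
have E1 : q * k + s + k + k = (q + 2) * (k : int) + s by ring.
have E2 : q * k + s + k = (q + 1) * (k : int) + s by ring.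
rewrite E1 E2 !IAP_eq //; ring.
Qed.

Lemma u_per (k : nat) (A : 'rV[int]_k) (k0 : (0 < k)%N) (m : int) (N : nat) :
  (forall s, (s < k)%N -> (m %| (N : int) * rv_at (A *m Xk k) s)%Z) ->
  forall x, (m %| IAP A (A *m Xk k) (x + (N : int) * k) - IAP A (A *m Xk k) x)%Z.
Proof.
move=> H x.
have [q [s [hs ->]]] := decomp k x k0.
have E1 : q * k + s + (N : int) * k = (q + N) * (k : int) + s by ring.
rewrite E1 !IAP_eq //.
have -> : rv_at A s + (q + N) * rv_at (A *m Xk k) s - (rv_at A s + q * rv_at (A *m Xk k) s)
   = (N : int) * rv_at (A *m Xk k) s by ring.
exact: H.
Qed.

Lemma u_zero (k : nat) (A : 'rV[int]_k) s : (s < k)%N -> IAP A (A *m Xk k) s = rv_at A s.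
Proof.
move=> hs; have -> : (s : int) = 0 * (k : int) + s by ring.
by rewrite IAP_eq // mul0r addr0.
Qed.

Lemma u_Nk (k : nat) (A : 'rV[int]_k) s (N : nat) : (s < k)%N -> IAP A (A *m Xk k) ((s : int) + (N : int) * k) - IAP A (A *m Xk k) s = (N : int) * rv_at (A *m Xk k) s.
Proof.
move=> hs; have -> : (s : int) + (N : int) * k = (N : int) * (k : int) + s by ring.
rewrite u_zero // IAP_eq //; ring.
Qed.



Lemma L1 n (x : int) :
  \sum_(l < n.+1) (if (l : int) == x then ('C(n, l) : int) else 0) = binz n x.
Proof.
rewrite /binz; case: x => [x|x] /=.
  case: (ltnP x n.+1) => hx.
    rewrite (bigD1 (Ordinal hx)) //= eqxx big1 ?addr0 // => l hl.
    case: eqP => // E; case/eqP: hl; apply: val_inj => /=; by case: E.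
  rewrite big1 ?bin_small // => l _; case: eqP => // E.
  by move: (ltn_ord l); case: E => ->; rewrite ltnNge hx.
by rewrite big1.
Qed.

Lemma Hind (k r l s : nat) (a : int) : (0 < k)%N -> (s < k)%N ->
  ((l : int) == a * (k : int) + (s : int) - (r : int)) =
  (a == (((r + l) %/ k)%N : int)) && (s == ((r + l) %% k)%N).
Proof.
move=> k0 hs.
have E0 := divn_eq (r + l) k.
have hm := ltn_pmod (r + l) k0.
move: E0 hm; move: ((r + l) %/ k)%N ((r + l) %% k)%N => q sm E0 hm.
apply/idP/idP.
  move/eqP => E.
  case: a E => [a|a] E; last first.
    exfalso; rewrite NegzE in E; nia.
  have Enat : (a * k + s = q * k + sm)%N by lia.
  have := congr1 (fun x => x %/ k)%N Enat.
  rewrite !divnMDl // !divn_small // !addn0 => Ea.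
  have := congr1 (fun x => x %% k)%N Enat.
  rewrite !modnMDl !modn_small // => Es.
  by rewrite Ea Es !eqxx.
case/andP => /eqP -> /eqP ->; apply/eqP; lia.
Qed.

Lemma Ksum (k n r l s : nat) (F : int -> int) (c : int) : (0 < k)%N -> (r < k)%N -> (l <= n)%N ->
  (s < k)%N ->
  \sum_(t < (2 * n + 3)%N) F ((t : int) - (n.+1 : int)) *
     (if (l : int) == ((t : int) - (n.+1 : int)) * (k : int) + (s : int) - (r : int)
      then c else 0)
  = if s == ((r + l) %% k)%N then F (((r + l) %/ k)%N : int) * c else 0.
Proof.
move=> k0 hr hl hs.
under eq_bigr => t _ do rewrite Hind //.
case: eqP => hsl; last first.
  by rewrite big1 // => t _; rewrite andbF mulr0.
have hq : ((r + l) %/ k < n.+1)%N.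
  have := leq_trunc_div (r + l) k; move: ((r + l) %/ k)%N => q hq; nia.
have ht0 : ((r + l) %/ k + n.+1 < 2 * n + 3)%N by lia.
rewrite (bigD1 (Ordinal ht0)) //= big1 ?addr0.
  have -> : (((r + l) %/ k + n.+1)%N : int) - (n.+1 : int) = (((r + l) %/ k)%N : int) by lia.
  by rewrite eqxx andbT.
move=> t ht; rewrite andbT; case: eqP => E; last by rewrite mulr0.
case/eqP: ht; apply: val_inj => /=; lia.
Qed.

Lemma claim k n r (hr : (r < k)%N) (F : int -> int) (a : 'rV[int]_k) : (0 < k)%N ->
  \sum_(s < k) a 0 s * (\sum_(t < (2 * n + 3)%N) F ((t : int) - (n.+1 : int)) *
       binz n (((t : int) - (n.+1 : int)) * (k : int) + (s : int) - (r : int)))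
  = \sum_(l < n.+1) ('C(n, l) : int) * (F (((r + l) %/ k)%N : int) * rv_at a ((r + l) %% k)%N).
Proof.
move=> k0.
under eq_bigr => s _ do under eq_bigr => t _ do rewrite -L1 mulr_sumr.
under eq_bigr => s _ do rewrite exchange_big mulr_sumr.
rewrite exchange_big /=; apply: eq_bigr => l _.
have hl : (l <= n)%N by rewrite -ltnS.
under eq_bigr => s _ do rewrite (@Ksum k n r l s F _ k0 hr hl (ltn_ord s)).
have hsl := ltn_pmod (r + l) k0.
rewrite (bigD1 (Ordinal hsl)) //= eqxx big1 ?addr0.
  rewrite (@rv_atE _ a _ hsl); ring.
move=> s hs; case: eqP => E; last by rewrite mulr0.
by case/eqP: hs; apply: val_inj.
Qed.


Lemma F4 k n (A : 'rV[int]_k) r (hr : (r < k)%N) :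
  (A *m Mk k n) 0 (Ordinal hr) =
  (-1) ^+ n * (orbitA (IAP A (A *m Xk k)) n r - IAP A (A *m Xk k) r).
Proof.
have k0 : (0 < k)%N by case: k hr {A}.
set D := A *m Xk k.
rewrite /Mk /Wk !mulmxDr mulmxA mul_mx_scalar !mxE.
have hC : \sum_(s < k) A 0 s * Ck k n s (Ordinal hr) =
   \sum_(l < n.+1) ('C(n, l) : int) * ((fun _ => 1) (((r + l) %/ k)%N : int) * rv_at A ((r + l) %% k)%N).
  rewrite -(claim _ _ _ hr (fun _ => 1) A k0); apply: eq_bigr => s _.
  rewrite mxE; congr (_ * _); apply: eq_bigr => t _; by rewrite mul1r.
have hT : \sum_(s < k) D 0 s * Tk k n s (Ordinal hr) =
   \sum_(l < n.+1) ('C(n, l) : int) * (id (((r + l) %/ k)%N : int) * rv_at D ((r + l) %% k)%N).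
  rewrite -(claim _ _ _ hr id D k0); apply: eq_bigr => s _.
  by rewrite /Tk; congr (_ * _); rewrite mxE.
rewrite -/D hC hT /= addrAC -big_split /=.
have hS : \sum_(l < n.+1) (('C(n, l) : int) * (1 * rv_at A ((r + l) %% k)%N) +
      ('C(n, l) : int) * ((((r + l) %/ k)%N : int) * rv_at D ((r + l) %% k)%N)) =
   \sum_(l < n.+1) ('C(n, l) : int) * IAP A D ((r : int) + (l : int)).
  apply: eq_bigr => l _.
  have -> : (r : int) + (l : int) = (((r + l) %/ k)%N : int) * (k : int) + (((r + l) %% k)%N : int).
    by rewrite -PoszD {1}(divn_eq (r + l) k) PoszD PoszM.
  rewrite IAP_eq ?ltn_pmod //; ring.
rewrite hS orbit_formula.
have hu : IAP A D r = A 0 (Ordinal hr).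
  have -> : (r : int) = 0 * (k : int) + (r : int) by ring.
  by rewrite IAP_eq // mul0r addr0 (@rv_atE _ A _ hr).
rewrite hu.
set S := \sum_(l < n.+1) _.
have sq : (-1) ^+ n * (-1) ^+ n = 1 :> int by have := signrMK (R:=int) n 1; rewrite mulr1.
rewrite mulrBr mulrA sq mul1r exprS; ring.
Qed.


Lemma modE (d x y : int) : (x = y %[mod d])%Z <-> (d %| x - y)%Z.
Proof. by rewrite -eqz_mod_dvd; split => [->|/eqP]. Qed.

Lemma modE0 (d x : int) : (x = 0 %[mod d])%Z <-> (d %| x)%Z.
Proof. by rewrite modE subr0. Qed.

Lemma window (f : int -> int) (k : nat) (m : int) : (0 < k)%N ->
  (forall x : int, f (x + k + k) - f (x + k) = f (x + k) - f x) ->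
  (forall r, (r < 2 * k)%N -> (m %| f (- (k : int) + (r : int)))%Z) ->
  forall j, (m %| f j)%Z.
Proof.
move=> k0 Hsd Hw.
have key : forall t : nat, forall r : nat, (r < 2 * k)%N ->
   (m %| f (- (k : int) + (r : int) + (t : int)))%Z /\
   (m %| f (- (k : int) + (r : int) - (t : int)))%Z.
  elim=> [|t IH] r hr.
    by rewrite ?addr0 ?subr0 ?oppr0 ?addr0; split; apply: Hw.
  split.
    case: (ltnP r.+1 (2 * k)) => h.
      have -> : - (k : int) + (r : int) + (t.+1 : int) = - (k : int) + (r.+1 : int) + (t : int) by lia.
      by case: (IH _ h).
    set x := - (k : int) + (t : int).
    have -> : - (k : int) + (r : int) + (t.+1 : int) = x + k + k by rewrite /x; lia.
    have hk1 : (k < 2 * k)%N by lia.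
    have h0 : (0 < 2 * k)%N by lia.
    have E1 : x + k = - (k : int) + (k : int) + (t : int) by rewrite /x; lia.
    have E0 : x = - (k : int) + (0%N : int) + (t : int) by rewrite /x; lia.
    have -> : f (x + k + k) = (f (x + k + k) - f (x + k)) + f (x + k) by ring.
    rewrite Hsd.
    rewrite rpredD // ?rpredB //; rewrite ?E1 ?E0; by [case: (IH _ hk1) | case: (IH _ h0)].
  case: r hr => [|r] hr.
    set y := - (k : int) + (0%N : int) - (t.+1 : int).
    have hk1 : (k.-1 < 2 * k)%N by lia.
    have hk2 : ((2 * k).-1 < 2 * k)%N by lia.
    have E1 : y + k = - (k : int) + (k.-1 : int) - (t : int) by rewrite /y; lia.
    have E2 : y + k + k = - (k : int) + ((2 * k).-1 : int) - (t : int) by rewrite /y; lia.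
    have -> : f y = f (y + k) - (f (y + k) - f y) by ring.
    rewrite -Hsd.
    have [_ F1] := IH _ hk1; have [_ F2] := IH _ hk2.
    rewrite E2 E1; apply: rpredB; [exact: F1 | apply: rpredB; [exact: F2 | exact: F1]].
  have hr' : (r < 2 * k)%N by lia.
  have -> : - (k : int) + (r.+1 : int) - (t.+1 : int) = - (k : int) + (r : int) - (t : int) by lia.
  by case: (IH _ hr').
have h0 : (0 < 2 * k)%N by lia.
move=> j.
case E : (j + k) => [t|t].
  have -> : j = - (k : int) + (0%N : int) + (t : int) by lia.
  by case: (key t 0%N h0).
have -> : j = - (k : int) + (0%N : int) - (t.+1 : int) by rewrite NegzE in E; lia.
by case: (key t.+1 0%N h0).
Qed.


Lemma gcd_dvd_nat (m N y : nat) : (0 < N)%N ->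
  ((m %/ gcdn N m) %| y)%N = (m %| N * y)%N.
Proof.
move=> N0.
have g0 : (0 < gcdn N m)%N by rewrite gcdn_gt0 N0.
set g := gcdn N m.
have Em : m = (m %/ g * g)%N by rewrite divnK // dvdn_gcdr.
have EN : N = (N %/ g * g)%N by rewrite divnK // dvdn_gcdl.
have cop : coprime (m %/ g) (N %/ g).
  rewrite /coprime gcdnC.
  have : (gcdn (N %/ g) (m %/ g) * g = 1 * g)%N.
    by rewrite muln_gcdl -EN -Em mul1n.
  by move/eqP; rewrite eqn_pmul2r // => /eqP ->.
rewrite {2}Em {1}EN -mulnA (mulnC g) mulnA dvdn_pmul2r //.
by rewrite Gauss_dvdr.
Qed.

Lemma gcd_dvd (m N : nat) (y : int) : (0 < N)%N ->
  (((m %/ gcdn N m)%N : int) %| y)%Z = ((m : int) %| (N : int) * y)%Z.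
Proof.
move=> N0; rewrite !dvdzE abszM /= gcd_dvd_nat //.
Qed.

Lemma iter_per (f : int -> int) (m : int) (p : nat) :
  (forall x, (m %| f (x + (p : int)) - f x)%Z) ->
  forall c x, (m %| f (x + ((c * p)%N : int)) - f x)%Z.
Proof.
move=> H; elim=> [|c IH] x.
  by rewrite mul0n addr0 subrr dvdz0.
have -> : f (x + ((c.+1 * p)%N : int)) - f x =
   (f ((x + ((c * p)%N : int)) + (p : int)) - f (x + ((c * p)%N : int))) +
   (f (x + ((c * p)%N : int)) - f x).
  have -> : x + ((c.+1 * p)%N : int) = (x + ((c * p)%N : int)) + (p : int) by lia.
  ring.
by rewrite rpredD.
Qed.


Theorem theorem6 (m k : nat) (A : 'rV[int]_k) (lam p : nat) :
  (0 < lam)%N -> (0 < p)%N -> (k %| p)%N ->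
  periodic m (orbitA (IAP A (A *m Xk k))) p (lam * p)%N <->
  (pi_zero (m %/ gcdn (p %/ k) m)%N (A *m Xk k) /\ Lker m (Mk k (lam * p)%N) A).
Proof.
move=> lam0 p0 kp.
have k0 : (0 < k)%N by case: k kp {A} => //; rewrite dvd0n => /eqP E; rewrite E in p0.
set N := (p %/ k)%N.
have Ep : (p : int) = (N : int) * (k : int) by rewrite -PoszM /N divnK.
have N0 : (0 < N)%N by rewrite /N divn_gt0 // dvdn_leq.
set n := (lam * p)%N.
set D := A *m Xk k.
set u := IAP A D.
have Epi : pi_zero (m %/ gcdn N m)%N D <->
    (forall s, (s < k)%N -> ((m : int) %| (N : int) * rv_at D s)%Z).
  split.
    move=> H s hs; rewrite -gcd_dvd // (@rv_atE _ _ _ hs); apply/modE0; exact: H.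
  move=> H s; apply/modE0; rewrite gcd_dvd // -rv_at_ord; exact: H.
have EL : Lker m (Mk k n) A <->
    (forall r, (r < k)%N -> ((m : int) %| orbitA u n r - u r)%Z).
  have sq : forall x : int, (-1) ^+ n * ((-1) ^+ n * x) = x.
    by move=> x; rewrite signrMK.
  split.
    move=> H r hr; have := H (Ordinal hr); rewrite modE0 F4 -/D -/u => h.
    by rewrite -(sq (orbitA u n r - u r)) dvdz_mull.
  move=> H s; apply/modE0.
  have -> : s = Ordinal (ltn_ord s) by apply: val_inj.
  by rewrite F4 dvdz_mull // H.
rewrite Epi EL.
split.
  move=> H; split.
    move=> s hs; have := (H 0%N s).2; rewrite modE /= -/u.
    by rewrite Ep (@u_Nk k A s N hs).
  move=> r hr; have := (H 0%N r).1; rewrite modE add0n.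
  by [].
move=> [hP hL].
have hu : forall x, ((m : int) %| u (x + (p : int)) - u x)%Z.
  by move=> x; rewrite Ep; apply: (@u_per k A k0).
have hO : forall i x, ((m : int) %| orbitA u i (x + (p : int)) - orbitA u i x)%Z.
  move=> i x; rewrite -orbit_shift -orbit_sub; exact: orbit_dvd.
set e := fun x => orbitA u n x - u x.
have he : forall x, ((m : int) %| e (x + (p : int)) - e x)%Z.
  move=> x; rewrite /e.
  have -> : orbitA u n (x + p) - u (x + p) - (orbitA u n x - u x) =
     (orbitA u n (x + p) - orbitA u n x) - (u (x + p) - u x) by ring.
  by rewrite rpredB.
have hea : forall x, ((m : int) %| e (-1 - x) + e x)%Z.
  move=> x.
  set y := -1 - (n : int) - x.
  have Ey : y + ((lam * p)%N : int) = -1 - x by rewrite /y /n; lia.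
  have h1 := iter_per _ _ _ he lam y; rewrite Ey in h1.
  have h2 := iter_per _ _ _ hu lam y; rewrite Ey in h2.
  have ha : orbitA u n y = - orbitA u n x by rewrite /y orbit_anti // => z; apply: (@u_anti k A k0).
  have hb : u (-1 - x) = - u x by apply: (@u_anti k A k0).
  have -> : e (-1 - x) + e x = (e (-1 - x) - e y) + (u (-1 - x) - u y).
    by rewrite /e ha hb; ring.
  by rewrite rpredD.
have hsd : forall x : int, e (x + k + k) - e (x + k) = e (x + k) - e x.
  move=> x; rewrite /e.
  have h1 := orbit_sd _ _ n (@u_sd k A k0) x.
  have h2 := @u_sd k A k0 x.
  rewrite -/u in h1 h2; lia.
have hall : forall x, ((m : int) %| e x)%Z.
  apply: (@window e k _ k0 hsd) => r hr.
  case: (ltnP r k) => h.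
    have -> : - (k : int) + (r : int) = -1 - ((k - r.+1)%N : int) by lia.
    have hz : (k - r.+1 < k)%N by lia.
    have := hea ((k - r.+1)%N : int); have := hL _ hz; rewrite -/e => H1 H2.
    have -> : e (-1 - ((k - r.+1)%N : int)) =
       (e (-1 - ((k - r.+1)%N : int)) + e ((k - r.+1)%N : int)) - e ((k - r.+1)%N : int) by ring.
    by rewrite rpredB.
  have -> : - (k : int) + (r : int) = ((r - k)%N : int) by lia.
  by apply: hL; lia.
move=> i j; split; apply/modE.
  rewrite orbit_comp -orbit_sub; exact: orbit_dvd.
exact: hO.
Qed.
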